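(* Let $d\ge2$ and let $C_1,C_2$ be Archimedean $d$-copulas with strict generators $\phi_1,\phi_2$ that are regularly varying at $0$ with indices $-\alpha_1,-\alpha_2$, where $\alpha_1,\alpha_2\in[0,\infty]$. Then the following are equivalent: (1) $C_1<_{TD}C_2$; (2) $\lambda(C_1)<\lambda(C_2)$; (3) $\alpha_1<\alpha_2$.
   Context: A generator is a continuous, strictly decreasing function $\phi:[0,1]\to[0,\infty]$ with $\phi(1)=0$; it is strict if $\lim_{s\searrow0}\phi(s)=\infty$. A $d$-copula $C$ is Archimedean with strict generator $\phi$ if $C(\boldsymbol u)=\phi^{-1}(\sum_{k=1}^d\phi(u_k))$. $\phi$ is regularly varying at $0$ with index $-\alpha$, $\alpha\in[0,\infty)$, if $\lim_{s\searrow0}\phi(ts)/\phi(s)=t^{-\alpha}$ for all $t>0$; with index $-\infty$ ($\alpha=\infty$) if this limit is $\infty$ for $t\in(0,1)$, $1$ for $t=1$, $0$ for $t>1$. Tail dependence function: $\Lambda(\boldsymbol w;C)=\lim_{s\searrow0}C(s\boldsymbol w)/s$; tail dependence coefficient $\lambda(C)=\Lambda(\boldsymbol 1;C)=\lim_{s\searrow0}C(s,\dots,s)/s$. $C_1<_{TD}C_2$ means $\Lambda(\boldsymbol w;C_1)<\Lambda(\boldsymbol w;C_2)$ for all $\boldsymbol w\in(0,\infty)^d$. *)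

(* Defs.v *)
From mathcomp Require Import all_boot all_order all_algebra.
From mathcomp Require Import all_classical all_reals all_analysis.
Set Implicit Arguments. Unset Strict Implicit. Unset Printing Implicit Defensive.
Import Order.TTheory GRing.Theory Num.Theory.
Import numFieldNormedType.Exports.
Local Open Scope classical_set_scope.
Local Open Scope ring_scope.

Section Defs.
Variable R : realType.

Definition in_unit_cube (d : nat) (u : 'I_d -> R) := forall k, 0 <= u k <= 1.

(* d-copula: grounded, uniform margins, d-increasing on [0,1]^d *)
Definition is_copula (d : nat) (C : ('I_d -> R) -> R) : Prop :=
  [/\ (forall u, in_unit_cube u -> (exists k, u k = 0) -> C u = 0),
      (forall u k, in_unit_cube u -> (forall j, j != k -> u j = 1) -> C u = u k) &
      (forall a b, in_unit_cube a -> in_unit_cube b -> (forall k, a k <= b k) ->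
        0 <= \sum_(S : {set 'I_d})
               (-1) ^+ #|~: S| * C (fun k => if k \in S then b k else a k))].

(* generator phi : [0,1] -> [0,+oo] (values outside [0,1] irrelevant) *)
Definition generator (phi : R -> \bar R) : Prop :=
  [/\ {within `[0, 1], continuous phi},
      (forall x, 0 <= x <= 1 -> (0 <= phi x)%E),
      (forall x y, 0 <= x <= 1 -> 0 <= y <= 1 -> x < y -> (phi y < phi x)%E) &
      phi 1 = 0%E].

Definition strict_generator (phi : R -> \bar R) : Prop :=
  generator phi /\ phi x @[x --> 0^'+] --> +oo%E.

Definition gen_inv (phi : R -> \bar R) (t : \bar R) : R :=
  xget 0 [set s : R | 0 <= s <= 1 /\ phi s = t].

Definition archimedean_with (d : nat) (C : ('I_d -> R) -> R) (phi : R -> \bar R) :=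
  forall u, in_unit_cube u -> C u = gen_inv phi (\sum_(k < d) phi (u k))%E.

Definition regvar0 (phi : R -> \bar R) (alpha : \bar R) : Prop :=
  match alpha with
  | a%:E => forall t : R, 0 < t ->
      (fine (phi (t * s)) / fine (phi s)) @[s --> 0^'+] --> t `^ (- a)
  | +oo%E =>
      (forall t : R, 0 < t < 1 ->
        ((fine (phi (t * s)) / fine (phi s))%:E) @[s --> 0^'+] --> +oo%E) /\
      ((fine (phi (1 * s)) / fine (phi s)) @[s --> 0^'+] --> (1 : R)) /\
      (forall t : R, 1 < t ->
        (fine (phi (t * s)) / fine (phi s)) @[s --> 0^'+] --> (0 : R))
  | -oo%E => False
  end.

Definition tdf (d : nat) (C : ('I_d -> R) -> R) (w : 'I_d -> R) : R :=
  lim (C (fun k => s * w k) / s @[s --> 0^'+]).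

Definition tdc (d : nat) (C : ('I_d -> R) -> R) : R := tdf C (fun _ => 1).

Definition lt_TD (d : nat) (C1 C2 : ('I_d -> R) -> R) : Prop :=
  forall w : 'I_d -> R, (forall k, 0 < w k) -> tdf C1 w < tdf C2 w.

End Defs.

(* Main.v *)
Require Import Defs.
From mathcomp Require Import all_boot all_order all_algebra.
From mathcomp Require Import all_classical all_reals all_analysis.
From mathcomp Require Import lra.
Import Order.TTheory GRing.Theory Num.Theory.

Section Aux.
Set Implicit Arguments. Unset Strict Implicit.
Import numFieldNormedType.Exports.
Local Open Scope classical_set_scope.
Local Open Scope ring_scope.
Variable R : realType.
Implicit Types phi : R -> \bar R.

Lemma gen_fin phi x : generator phi -> 0 < x <= 1 -> phi x = (fine (phi x))%:E.
Proof.
case=> _ hge hdec _ /andP[x0 x1].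
have hx : (phi x < phi (x/2)%R)%E.
  by apply: hdec; [apply/andP; split; lra|apply/andP; split; lra|lra].
rewrite fineK // ge0_fin_numE; last by apply: hge; apply/andP; split; lra.
exact: (lt_le_trans hx (leey _)).
Qed.

Lemma gen_cmp phi x y a b : generator phi -> 0 <= x <= 1 -> 0 <= y <= 1 ->
  phi x = a%:E -> phi y = b%:E -> a < b -> y < x.
Proof.
case=> _ _ hdec _ hx hy ha hb ab.
rewrite ltNge; apply/negP; rewrite le_eqVlt => /orP[/eqP xy|xy].
  by move: ha; rewrite xy hb => -[] ba; move: ab; rewrite ba ltxx.
by have := hdec _ _ hx hy xy; rewrite ha hb lte_fin => /(lt_trans ab); rewrite ltxx.
Qed.

Lemma gen_dec phi x y : generator phi -> 0 < x -> x < y -> y <= 1 ->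
  fine (phi y) < fine (phi x).
Proof.
move=> hg x0 xy y1.
have hx : 0 < x <= 1 by apply/andP; split; lra.
have hy : 0 < y <= 1 by apply/andP; split; lra.
case: (hg) => _ _ hdec _.
have := hdec x y; rewrite (gen_fin hg hx) (gen_fin hg hy) lte_fin; apply => //.
  by apply/andP; split; lra.
by apply/andP; split; lra.
Qed.

Lemma gen_pos phi x : generator phi -> 0 < x -> x < 1 -> 0 < fine (phi x).
Proof.
move=> hg x0 x1; have := gen_dec hg x0 x1 (lexx _).
by case: hg => _ _ _ ->.
Qed.


Lemma gen_inv_spec phi T : strict_generator phi -> 0 <= T ->
  0 <= gen_inv phi T%:E <= 1 /\ phi (gen_inv phi T%:E) = T%:E.
Proof.
move=> [hg hinf] T0.
suff [s [s01 hs]] : exists s, 0 <= s <= 1 /\ phi s = T%:E.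
  exact: (xgetPex 0 (ex_intro (fun s => 0 <= s <= 1 /\ phi s = T%:E) s (conj s01 hs))).
have : \forall x \near 0^'+, ((T+1)%:E < phi x)%E /\ 0 < x /\ x < 1.
  near=> x; split.
    near: x; exact: (cvgeyPgt _).1 hinf (T+1).
  split.
    near: x; exact: nbhs_right_gt.
  near: x; exact: nbhs_right_lt.
move=> hnear; have [x0 [hx0 [x00 x01]]] := @filter_ex _ _ (at_right_proper_filter 0) _ hnear.
case: (hg) => hcont _ _ phi1.
have cont : {within `[x0, 1], continuous (fine \o phi)}.
  have hc : {within `[x0,1], continuous phi}.
    apply: continuous_subspaceW hcont.
    move=> y /=; rewrite !in_itv /= => /andP[a b]; apply/andP; split; lra.
  rewrite continuous_subspace_in => x hx.
  rewrite continuous_subspace_in in hc.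
  have := hc x hx; move: hx; rewrite inE /= in_itv /= => /andP[a b] h.
  have e : phi x = (fine (phi x))%:E by apply: (gen_fin hg); apply/andP; split; lra.
  by apply: fine_cvg; rewrite /= -e.
have fx0 : T + 1 < fine (phi x0).
  by rewrite -lte_fin -(gen_fin hg) //; apply/andP; split; lra.
have hv : Num.min ((fine \o phi) x0) ((fine \o phi) 1) <= T <=
   Num.max ((fine \o phi) x0) ((fine \o phi) 1).
  rewrite /= phi1 /=; apply/andP; split.
    rewrite ge_min; apply/orP; right; lra.
  rewrite le_max; apply/orP; left; lra.
have [c hc hfc] := @IVT R (fine \o phi) x0 1 T (ltW x01) cont hv.
move: hc; rewrite in_itv /= => /andP[a b].
exists c; split; first by apply/andP; split; lra.
rewrite (gen_fin hg); [by rewrite -hfc|apply/andP; split; lra].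
Unshelve. all: by end_near.
Qed.


Lemma sum_pos_le d (w : 'I_d -> R) k : (forall i, 0 < w i) -> w k <= \sum_i w i.
Proof.
move=> hw; rewrite (bigD1 k) //= lerDl; apply: sumr_ge0 => i _; exact: ltW.
Qed.

Lemma arch_cvg phi d (C : ('I_d -> R) -> R) (w : 'I_d -> R) (L : R) :
  strict_generator phi -> archimedean_with C phi -> (forall k, 0 < w k) -> 0 <= L ->
  (forall t, 0 < t -> t < L -> \forall s \near 0^'+,
      \sum_k fine (phi (w k * s)) < fine (phi (t * s))) ->
  (forall t, L < t -> \forall s \near 0^'+,
      fine (phi (t * s)) < \sum_k fine (phi (w k * s))) ->
  C (fun k => s * w k) / s @[s --> 0^'+] --> L.
Proof.
move=> hs hA hw L0 lo up.
have hg := hs.1.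
apply/cvgrPdist_lt => eps eps0.
set t1 := L - eps / 2; set t2 := L + eps / 2.
set B := 1 + \sum_i w i + L + eps.
have B0 : 0 < B.
  have : 0 <= \sum_i w i by apply: sumr_ge0 => i _; exact: ltW.
  rewrite /B; lra.
have hlo : \forall s \near 0^'+, 0 < t1 ->
    \sum_k fine (phi (w k * s)) < fine (phi (t1 * s)).
  case: (ltP 0 t1) => h.
    by apply: filterS (lo t1 h _); [move=> s hh _|rewrite /t1; lra].
  by apply: nearW => s h'; exfalso; lra.
have Lt2 : L < t2 by rewrite /t2; lra.
have hup := up t2 Lt2.
near=> s.
have Hlo : 0 < t1 -> \sum_k fine (phi (w k * s)) < fine (phi (t1 * s)).
  near: s; exact hlo.
have Hup : fine (phi (t2 * s)) < \sum_k fine (phi (w k * s)).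
  near: s; exact hup.
have s0 : 0 < s by near: s; exact: nbhs_right_gt.
have sB : s * B < 1.
  have : s < B^-1 by near: s; apply: nbhs_right_lt; rewrite invr_gt0.
  by rewrite -(ltr_pM2r B0) mulVf ?gt_eqF.
have hwk k : 0 < w k * s < 1.
  have := sum_pos_le k hw; have := hw k.
  have : 0 <= \sum_i w i by apply: sumr_ge0 => i _; exact: ltW.
  move=> h1 h2 h3; apply/andP; split; first exact: mulr_gt0.
  rewrite /B in sB; nra.
have fin k : phi (s * w k) = (fine (phi (w k * s)))%:E.
  rewrite mulrC; apply: (gen_fin hg); case/andP: (hwk k) => a b.
  by apply/andP; split; lra.
have hS : 0 <= \sum_i w i by apply: sumr_ge0 => i _; exact: ltW.
have ht2 : 0 < t2 * s < 1.
  rewrite /B in sB; rewrite /t2; apply/andP; split; nra.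
have ht1 : t1 * s < t2 * s by rewrite /t1 /t2; nra.
set Psi := \sum_k fine (phi (w k * s)).
have Psi0 : 0 <= Psi.
  apply: sumr_ge0 => k _; case/andP: (hwk k) => a b; exact/ltW/(gen_pos hg).
have hu : in_unit_cube (fun k => s * w k).
  move=> k; case/andP: (hwk k) => a b; apply/andP; split; nra.
rewrite hA // (eq_bigr _ (fun k _ => fin k)) sumEFin -/Psi.
have [g01 hgP] := gen_inv_spec hs Psi0.
set g := gen_inv phi Psi%:E in g01 hgP *.
rewrite ltr_distlC; apply/andP; split.
  case: (ltP 0 t1) => h.
    have h1 : t1 * s < g.
      apply: (gen_cmp hg g01 _ hgP (gen_fin hg _)).
      - apply/andP; split; nra.
      - apply/andP; split; nra.
      - exact: Hlo.
    rewrite ltr_pdivlMr //; apply: le_lt_trans h1; rewrite /t1; nra.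
  have : 0 <= g / s by apply: divr_ge0 => //; case/andP: g01.
  rewrite /t1 in h; lra.
have h2 : g < t2 * s.
  apply: (gen_cmp hg _ g01 (gen_fin hg _) hgP).
  - apply/andP; split; nra.
  - apply/andP; split; nra.
  - exact: Hup.
rewrite ltr_pdivrMr //; apply: lt_le_trans h2 _; rewrite /t2; nra.
Unshelve. all: by end_near.
Qed.


Lemma near_scale (c : R) (P : R -> Prop) : 0 < c ->
  (\forall x \near 0^'+, P x) -> \forall s \near 0^'+, P (c * s).
Proof.
move=> c0; rewrite !near_withinE => /(@nbhs_norm0P R R^o) [e /= e0 he].
apply/(@nbhs_norm0P R R^o); exists (e / c) => /=; first by rewrite divr_gt0.
move=> y /= hy y0; apply: he => /=; last by rewrite mulr_gt0.
rewrite normrM gtr0_norm //; move: hy; rewrite ltr_pdivlMr // => hy; nra.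
Qed.


Lemma ratio_cmp phi (u v : R -> R) lu lv : generator phi -> lu < lv ->
  u s / fine (phi s) @[s --> 0^'+] --> lu ->
  v s / fine (phi s) @[s --> 0^'+] --> lv ->
  \forall s \near 0^'+, u s < v s.
Proof.
move=> hg luv hu hv.
have hu' := cvgr_lt lu hu ((lu + lv) / 2) (_ : lu < (lu + lv) / 2).
have hv' := cvgr_gt lv hv ((lu + lv) / 2) (_ : (lu + lv) / 2 < lv).
near=> s.
have a : u s / fine (phi s) < (lu + lv) / 2 by near: s; apply: hu'; lra.
have b : (lu + lv) / 2 < v s / fine (phi s) by near: s; apply: hv'; lra.
have s0 : 0 < s by near: s; exact: nbhs_right_gt.
have s1 : s < 1 by near: s; exact: nbhs_right_lt.
have fp := gen_pos hg s0 s1.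
by have := lt_trans a b; rewrite ltr_pM2r // invr_gt0.
Unshelve. all: by end_near.
Qed.

Lemma near_all d (w : 'I_d -> R) : (forall k, 0 < w k) ->
  \forall s \near 0^'+, 0 < s /\ forall k, 0 < w k * s < 1.
Proof.
move=> hw.
have hS : 0 <= \sum_i w i by apply: sumr_ge0 => i _; exact: ltW.
have B0 : 0 < 1 + \sum_i w i by lra.
near=> s.
have s0 : 0 < s by near: s; exact: nbhs_right_gt.
have sB : s * (1 + \sum_i w i) < 1.
  have : s < (1 + \sum_i w i)^-1.
    by near: s; apply: nbhs_right_lt; rewrite invr_gt0.
  by rewrite -ltr_pdivlMr // div1r.
split => // k; have := sum_pos_le k hw; have := hw k => h1 h2.
apply/andP; split; [exact: mulr_gt0|nra].
Unshelve. all: by end_near.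
Qed.

Lemma rv_fin_sum phi d (w : 'I_d -> R) a : (forall k, 0 < w k) ->
  regvar0 phi a%:E ->
  (\sum_k fine (phi (w k * s))) / fine (phi s) @[s --> 0^'+] --> \sum_k w k `^ (-a).
Proof.
move=> hw hrv.
under eq_cvg do rewrite mulr_suml.
apply: (@cvg_big R^o 'I_d +%R 0 xpredT add_continuous) => k _.
exact: hrv.
Qed.


Lemma gen_le phi x y : generator phi -> 0 < x -> x <= y -> y <= 1 ->
  fine (phi y) <= fine (phi x).
Proof.
move=> hg x0; rewrite le_eqVlt => /orP[/eqP -> //|xy] y1.
exact/ltW/(gen_dec hg x0 xy y1).
Qed.

Lemma pow_cmp (a c t : R) : 0 < a -> 0 < c -> 0 < t ->
  (t < c `^ (- a^-1)) = (c < t `^ (- a)).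
Proof.
move=> a0 c0 t0.
have -> : (t < c `^ (- a^-1)) = (ln t < ln (c `^ (- a^-1))).
  by rewrite ltr_ln // posrE powR_gt0.
have -> : (c < t `^ (- a)) = (ln c < ln (t `^ (- a))).
  by rewrite ltr_ln // posrE powR_gt0.
rewrite !ln_powR.
rewrite -(ltr_pM2l a0) !mulNr mulrN mulrA mulfV ?gt_eqF // mul1r.
by rewrite ltrNr.
Qed.

Lemma pow_cmp2 (a c t : R) : 0 < a -> 0 < c -> 0 < t ->
  (c `^ (- a^-1) < t) = (t `^ (- a) < c).
Proof.
move=> a0 c0 t0.
have -> : (c `^ (- a^-1) < t) = (ln (c `^ (- a^-1)) < ln t).
  by rewrite ltr_ln // posrE powR_gt0.
have -> : (t `^ (- a) < c) = (ln (t `^ (- a)) < ln c).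
  by rewrite ltr_ln // posrE powR_gt0.
rewrite !ln_powR.
rewrite -(ltr_pM2l a0) !mulNr mulrN mulrA mulfV ?gt_eqF // mul1r.
by rewrite ltrNl.
Qed.

Definition Lfin d (a : R) (w : 'I_d -> R) := (\sum_k w k `^ (-a)) `^ (- a^-1).

Lemma lim_zero phi d (C : ('I_d -> R) -> R) (w : 'I_d -> R) : (2 <= d)%N ->
  strict_generator phi -> archimedean_with C phi -> (forall k, 0 < w k) ->
  regvar0 phi 0%:E ->
  C (fun k => s * w k) / s @[s --> 0^'+] --> 0.
Proof.
move=> hd hs hA hw hrv.
apply: (arch_cvg hs hA hw (lexx 0)) => [t t0 t0'|t t0]; first by exfalso; lra.
apply: (ratio_cmp hs.1 _ (hrv t t0) (rv_fin_sum hw hrv)).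
rewrite oppr0 powRr0.
under eq_bigr do rewrite powRr0.
by rewrite sumr_const card_ord ltr1n.
Qed.

Lemma lim_pos phi d (C : ('I_d -> R) -> R) (w : 'I_d -> R) a : (0 < d)%N ->
  strict_generator phi -> archimedean_with C phi -> (forall k, 0 < w k) ->
  0 < a -> regvar0 phi a%:E ->
  C (fun k => s * w k) / s @[s --> 0^'+] --> Lfin a w.
Proof.
move=> hd hs hA hw a0 hrv.
have c0 : 0 < \sum_k w k `^ (-a).
  have i0 : 'I_d := Ordinal hd.
  apply: (lt_le_trans _ (sum_pos_le i0 (fun k => powR_gt0 (-a) (hw k)))).
  exact: powR_gt0.
apply: (arch_cvg hs hA hw (powR_ge0 _ _)) => [t t0 tL|t tL].
  rewrite /Lfin pow_cmp // in tL.
  exact: (ratio_cmp hs.1 tL (rv_fin_sum hw hrv) (hrv t t0)).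
have t0 : 0 < t by apply: le_lt_trans tL; exact: powR_ge0.
rewrite /Lfin pow_cmp2 // in tL.
exact: (ratio_cmp hs.1 tL (hrv t t0) (rv_fin_sum hw hrv)).
Qed.


Lemma lim_inf phi d (C : ('I_d -> R) -> R) (w : 'I_d -> R) (j : 'I_d) :
  strict_generator phi -> archimedean_with C phi -> (forall k, 0 < w k) ->
  (forall k, w j <= w k) -> regvar0 phi +oo%E ->
  C (fun k => s * w k) / s @[s --> 0^'+] --> w j.
Proof.
move=> hs hA hw hj [hrv1 _].
have hg := hs.1.
have wj0 := hw j.
have hall := near_all hw.
apply: (arch_cvg hs hA hw (ltW wj0)) => [t t0 tL|t tL].
  have ht' : 0 < t / w j < 1.
    by apply/andP; split; [rewrite divr_gt0|rewrite ltr_pdivrMr // mul1r].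
  have h1 := (cvgeyPgt _).1 (hrv1 _ ht') d%:R.
  have h2 := near_scale wj0 (h1 _).
  near=> s.
  have H2 : (d%:R%:E < (fine (phi (t / w j * (w j * s))) / fine (phi (w j * s)))%:E)%E.
    near: s; exact: h2.
  have [s0 hk] : 0 < s /\ forall k, 0 < w k * s < 1 by near: s; exact: hall.
  rewrite lte_fin mulrA divfK ?gt_eqF // in H2.
  have fj : 0 < fine (phi (w j * s)).
    by case/andP: (hk j) => a b; apply: gen_pos.
  rewrite ltr_pdivlMr // in H2.
  apply: le_lt_trans H2.
  have hle : \sum_k fine (phi (w k * s)) <= \sum_(k < d) fine (phi (w j * s)).
    apply: ler_sum => k _.
    case/andP: (hk j) => a _; case/andP: (hk k) => _ b.
    by apply: (gen_le hg a); [rewrite ler_pM2r|exact: ltW].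
  by apply: (le_trans hle); rewrite sumr_const card_ord mulr_natl.
have t0 : 0 < t by apply: lt_trans tL.
near=> s.
have [s0 hk] : 0 < s /\ forall k, 0 < w k * s < 1 by near: s; exact: hall.
have ts1' : s < t^-1 by near: s; apply: nbhs_right_lt; rewrite invr_gt0.
have ts1 : t * s < 1.
  have e : t * t^-1 = 1 by rewrite mulfV ?gt_eqF.
  nra.
apply: (lt_le_trans (gen_dec hg (_ : 0 < w j * s) _ (ltW ts1))).
  by case/andP: (hk j).
  by rewrite ltr_pM2r.
rewrite (bigD1 j) //= lerDl; apply: sumr_ge0 => k _.
by case/andP: (hk k) => a b; exact/ltW/(gen_pos hg).
Unshelve. all: by end_near.
Qed.


Lemma sum_pos_lt d (w : 'I_d -> R) k : (1 < d)%N -> (forall i, 0 < w i) ->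
  w k < \sum_i w i.
Proof.
move=> hd hw.
have [j hjk] : exists j : 'I_d, j != k.
  case: k => [[|m] hm].
    by exists (Ordinal hd).
  by exists (Ordinal (ltn_trans (isT : (0 < 1)%N) hd)).
rewrite (bigD1 k) //= ltrDl (bigD1 j) //=.
have : 0 <= \sum_(i | (i != k) && (i != j)) w i by apply: sumr_ge0 => i _; exact: ltW.
have := hw j; lra.
Qed.

Lemma pow_gt_self (y p : R) : 0 < y < 1 -> 0 < p < 1 -> y < y `^ p.
Proof.
move=> /andP[y0 y1] /andP[p0 p1].
have -> : (y < y `^ p) = (ln y < ln (y `^ p)) by rewrite ltr_ln // posrE powR_gt0.
rewrite ln_powR; have : ln y < 0 by apply: ln_lt0; rewrite y0 y1.
nra.
Qed.

Lemma Lfin_pos d (w : 'I_d -> R) a : (0 < d)%N -> (forall k, 0 < w k) -> 0 < Lfin a w.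
Proof.
move=> hd hw; apply: powR_gt0.
apply: (lt_le_trans _ (sum_pos_le (Ordinal hd) (fun k => powR_gt0 (-a) (hw k)))).
exact: powR_gt0.
Qed.

Lemma Lfin_lt_min d (w : 'I_d -> R) a j : (1 < d)%N -> (forall k, 0 < w k) -> 0 < a ->
  Lfin a w < w j.
Proof.
move=> hd hw a0.
have hd0 : (0 < d)%N by apply: ltn_trans hd.
rewrite /Lfin pow_cmp2 //.
- exact: (sum_pos_lt j hd (fun k => powR_gt0 (-a) (hw k))).
- apply: (lt_le_trans _ (sum_pos_le (Ordinal hd0) (fun k => powR_gt0 (-a) (hw k)))).
  exact: powR_gt0.
Qed.

Lemma Lfin_mono d (w : 'I_d -> R) a b : (1 < d)%N -> (forall k, 0 < w k) ->
  0 < a -> a < b -> Lfin a w < Lfin b w.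
Proof.
move=> hd hw a0 ab.
have hd0 : (0 < d)%N by apply: ltn_trans hd.
have b0 : 0 < b by apply: lt_trans ab.
set cb := \sum_k w k `^ (-b).
have cb0 : 0 < cb.
  apply: (lt_le_trans _ (sum_pos_le (Ordinal hd0) (fun k => powR_gt0 (-b) (hw k)))).
  exact: powR_gt0.
have ca0 : 0 < \sum_k w k `^ (-a).
  apply: (lt_le_trans _ (sum_pos_le (Ordinal hd0) (fun k => powR_gt0 (-a) (hw k)))).
  exact: powR_gt0.
set p := a / b.
have p0 : 0 < p by rewrite divr_gt0.
have p1 : p < 1 by rewrite /p ltr_pdivrMr // mul1r.
have M0 : 0 < Lfin b w by apply: Lfin_pos.
rewrite {1}/Lfin pow_cmp2 //.
have eM : Lfin b w `^ (-a) = cb `^ p.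
  by rewrite /Lfin -powRrM mulrNN mulrC.
have ey k : w k `^ (-a) = cb `^ p * (w k `^ (-b) / cb) `^ p.
  rewrite -powRM ?powR_ge0 ?divr_ge0 ?powR_ge0 ?(ltW cb0) //.
  rewrite [cb * _]mulrC divfK ?gt_eqF // -powRrM.
  by rewrite /p mulNr mulrC divfK ?gt_eqF.
rewrite (eq_bigr _ (fun k _ => ey k)) -mulr_sumr eM.
rewrite -{1}(mulr1 (cb `^ p)) ltr_pM2l ?powR_gt0 //.
have s1 : \sum_k w k `^ (-b) / cb = 1 by rewrite -mulr_suml mulfV ?gt_eqF.
rewrite -{1}s1 -subr_gt0 -sumrB.
have hk k : 0 < (w k `^ (-b) / cb) `^ p - w k `^ (-b) / cb.
  rewrite subr_gt0; apply: pow_gt_self; last by rewrite p0 p1.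
  rewrite divr_gt0 ?powR_gt0 //= ltr_pdivrMr // mul1r.
  exact: (sum_pos_lt k hd (fun k => powR_gt0 (-b) (hw k))).
exact: (lt_le_trans (hk (Ordinal hd0)) (sum_pos_le (Ordinal hd0) hk)).
Qed.


Definition Lv d (i0 : 'I_d) (alpha : \bar R) (w : 'I_d -> R) : R :=
  match alpha with
  | a%:E => if a == 0 then 0 else Lfin a w
  | +oo%E => w [arg min_(i < i0) w i]%O
  | -oo%E => 0
  end.

Lemma tdf_Lv phi d (i0 : 'I_d) (C : ('I_d -> R) -> R) alpha w : (2 <= d)%N ->
  strict_generator phi -> archimedean_with C phi -> (0 <= alpha)%E ->
  regvar0 phi alpha -> (forall k, 0 < w k) -> tdf C w = Lv i0 alpha w.
Proof.
move=> hd hs hA ha hrv hw; rewrite /tdf.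
apply: (cvg_lim (@Rhausdorff R)).
case: alpha ha hrv => [a| |] ha hrv //=.
- case: eqP => [a0|an0].
    by subst a; exact: (lim_zero hd hs hA hw hrv).
  have hd0 : (0 < d)%N by apply: ltn_trans hd.
  apply: (lim_pos hd0 hs hA hw _ hrv).
  by rewrite lt_neqAle eq_sym; apply/andP; split; [apply/eqP|rewrite -lee_fin].
- case: arg_minP => // j _ hj.
  by apply: (lim_inf hs hA hw _ hrv) => k; exact: hj.
Qed.

Lemma Lv_mono d (i0 : 'I_d) alpha beta w : (1 < d)%N -> (forall k, 0 < w k) ->
  (0 <= alpha)%E -> (alpha < beta)%E -> Lv i0 alpha w < Lv i0 beta w.
Proof.
move=> hd hw ha hab.
have hd0 : (0 < d)%N by apply: ltn_trans hd.
case: alpha beta ha hab => [a| |] [b| |] //= ha hab.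
- rewrite lee_fin in ha; rewrite lte_fin in hab.
  case: eqP => [a0|an0]; case: eqP => [b0|bn0].
  + by subst; rewrite ltxx in hab.
  + exact: Lfin_pos.
  + by exfalso; subst b; move: an0 ha hab; rewrite le_eqVlt => /[swap] /orP[/eqP <-//|]; lra.
  + apply: Lfin_mono => //; rewrite lt_neqAle eq_sym; apply/andP; split => //; exact/eqP.
- case: arg_minP => // j _ hj.
  case: eqP => [a0|an0]; first exact: hw.
  apply: Lfin_lt_min => //; rewrite lee_fin in ha.
  by rewrite lt_neqAle eq_sym; apply/andP; split => //; exact/eqP.
Qed.

End Aux.

Unset Implicit Arguments.
Local Open Scope ring_scope.

Theorem mainTheorem14 (R : realType) (d : nat) (hd : (2 <= d)%N)
  (C1 C2 : ('I_d -> R) -> R) (phi1 phi2 : R -> \bar R) (alpha1 alpha2 : \bar R)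
  (hC1 : is_copula C1) (hC2 : is_copula C2)
  (hphi1 : strict_generator phi1) (hphi2 : strict_generator phi2)
  (hA1 : archimedean_with C1 phi1) (hA2 : archimedean_with C2 phi2)
  (ha1 : (0 <= alpha1)%E) (ha2 : (0 <= alpha2)%E)
  (hrv1 : regvar0 phi1 alpha1) (hrv2 : regvar0 phi2 alpha2) :
  [/\ (lt_TD C1 C2 <-> tdc C1 < tdc C2),
      (tdc C1 < tdc C2 <-> (alpha1 < alpha2)%E) &
      (lt_TD C1 C2 <-> (alpha1 < alpha2)%E)].
Proof.
have hd0 : (0 < d)%N by apply: ltn_trans hd.
pose i0 : 'I_d := Ordinal hd0.
have key w : (forall k, 0 < w k) -> (tdf C1 w < tdf C2 w <-> (alpha1 < alpha2)%E).
  move=> hw.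
  rewrite (tdf_Lv i0 hd hphi1 hA1 ha1 hrv1 hw) (tdf_Lv i0 hd hphi2 hA2 ha2 hrv2 hw).
  split => h; last exact: Lv_mono.
  rewrite ltNge; apply/negP; rewrite le_eqVlt => /orP[/eqP e|lt].
    by move: h; rewrite e ltxx.
  by have := lt_trans h (Lv_mono i0 hd hw ha2 lt); rewrite ltxx.
have one : forall k : 'I_d, (0 : R) < (fun _ => 1) k by move=> k; exact: ltr01.
have k1 := key _ one.
rewrite /tdc; split => //.
- split; first by move=> h; exact: h _ one.
  by move=> h w hw; apply/(key w hw)/k1.
- split; first by move=> h; exact/k1/(h _ one).
  by move=> h w hw; apply/(key w hw).
Qed.
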